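(* Let $R$ be a finite local commutative ring with residue field of order $q$, let $K\le R^\times$, and suppose the cyclotomic scheme $\mathrm{Cyc}(K,R)$ is normal. Suppose that $K+I=K$ for some ideal $I$ of $R$ (where $K+I=\{k+x: k\in K, x\in I\}$). Then $I=\{0\}$ unless $q=2$. Moreover, if $q=2$, then $I\subseteq I_0$, where $I_0=\{x\in\mathrm{rad}(R):\ x\,\mathrm{rad}(R)=\{0\}\}$.
   Context: All rings have an identity. For a finite local commutative ring $R$, $\mathrm{rad}(R)$ is its unique maximal ideal and $R/\mathrm{rad}(R)$ its residue field. For a subgroup $K$ of $R^\times$, the cyclotomic scheme $\mathrm{Cyc}(K,R)$ is the pair $(R,\mathrm{Rel}(K,R))$, where $\mathrm{Rel}(K,R)$ is the set of binary relations $\{(x,y)\in R\times R:\ y-x\in rK\}$, $r\in R$. Its automorphism group $\mathrm{Aut}(\mathcal C)$ is the group of permutations $f$ of $R$ with $S^f=S$ for every $S\in\mathrm{Rel}(K,R)$. $\mathrm{A\Gamma L}_1(R)$ is the group of permutations $x\mapsto ax^\sigma+b$ with $a\in R^\times$, $b\in R$, $\sigma\in\mathrm{Aut}(R)$. The scheme is normal if $\mathrm{Aut}(\mathcal C)\le\mathrm{A\Gamma L}_1(R)$. *)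

(* Defs.v *)
From HB Require Import structures.
From mathcomp Require Import all_boot all_order all_algebra all_fingroup.
Set Implicit Arguments. Unset Strict Implicit. Unset Printing Implicit Defensive.
Import GRing.Theory.
Local Open Scope ring_scope.

Section Defs.
Variable R : finComUnitRingType.

Definition is_ideal (I : {set R}) : Prop :=
  0 \in I /\ (forall x y, x \in I -> y \in I -> x + y \in I) /\
  (forall r x, x \in I -> r * x \in I).

Definition is_maximal_ideal (M : {set R}) : Prop :=
  is_ideal M /\ M != [set: R] /\
  (forall J, is_ideal J -> M \subset J -> J = M \/ J = [set: R]).

Definition is_local : Prop :=
  exists M, is_maximal_ideal M /\ forall M', is_maximal_ideal M' -> M' = M.

Definition residue_order (M : {set R}) : nat :=
  #|[set [set x + m | m in M] | x : R]|.

Definition Kset (K : {group {unit R}}) : {set R} := [set val u | u in K].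

Definition cycRel (K : {group {unit R}}) (r : R) : {set R * R} :=
  [set p : R * R | p.2 - p.1 \in [set r * k | k in Kset K]].

Definition cyc_aut (K : {group {unit R}}) (f : {perm R}) : Prop :=
  forall r : R, [set (f p.1, f p.2) | p in cycRel K r] = cycRel K r.

Definition is_ring_aut (s : R -> R) : Prop :=
  bijective s /\ (forall x y, s (x + y) = s x + s y) /\
  (forall x y, s (x * y) = s x * s y) /\ s 1 = 1.

Definition in_AGammaL1 (f : R -> R) : Prop :=
  exists (a : {unit R}) (b : R) (s : R -> R),
    is_ring_aut s /\ forall x, f x = val a * s x + b.

Definition cyc_normal (K : {group {unit R}}) : Prop :=
  forall f : {perm R}, cyc_aut K f -> in_AGammaL1 f.

Definition I0 (M : {set R}) : {set R} :=
  [set x in M | [forall y in M, x * y == 0]].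

End Defs.

(* Main.v *)
Require Import Defs.
From mathcomp Require Import all_boot all_order all_algebra all_fingroup.
From mathcomp Require Import ring.
Import GRing.Theory.
Local Open Scope ring_scope.
Set Implicit Arguments. Unset Strict Implicit.

Section Aux.
Variable R : finComUnitRingType.

Definition idealb (J : {set R}) : bool :=
  [&& (0 \in J), [forall x, forall y, (x \in J) ==> (y \in J) ==> (x + y \in J)]
   & [forall r, forall x, (x \in J) ==> (r * x \in J)]].

Lemma idealP J : reflect (is_ideal J) (idealb J).
Proof.
apply: (iffP idP).
- case/and3P => [H0 /forallP Ha /forallP Hm]; split; [by [] | split].
  + move=> x y hx hy; move: (Ha x) => /forallP /(_ y); by rewrite hx hy.
  + move=> r x hx; move: (Hm r) => /forallP /(_ x); by rewrite hx.
- move=> [H0 [Ha Hm]]; rewrite /idealb H0 /=; apply/andP; split.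
  + apply/forallP => x; apply/forallP => y; apply/implyP => hx; apply/implyP => hy; auto.
  + apply/forallP => r; apply/forallP => x; apply/implyP => hx; auto.
Qed.

Lemma exists_max (J : {set R}) : is_ideal J -> J != setT ->
  exists M', is_maximal_ideal M' /\ J \subset M'.
Proof.
move=> hJ hJT.
pose P := fun J' : {set R} => [&& idealb J', J \subset J' & J' != setT].
have PJ : P J by rewrite /P subxx hJT !andbT; apply/idealP.
case: (arg_maxnP (fun J' : {set R} => #|J'|) PJ) => Jm /and3P [hi hs hT] hmax.
exists Jm; split=> //; split; [exact/idealP | split => //].
move=> J' hJ' hsub; case: (boolP (J' == setT)) => [/eqP -> | hne]; [by right|left].
have : P J' by rewrite /P (subset_trans hs hsub) hne !andbT; apply/idealP.
move/hmax => hle; apply/eqP; rewrite eq_sym eqEcard hsub; exact: hle.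
Qed.

Lemma ideal_opp (J : {set R}) : is_ideal J -> forall x, x \in J -> - x \in J.
Proof. move=> [_ [_ Hm]] x hx; rewrite -mulN1r; exact: Hm. Qed.

Lemma ideal_sub (J : {set R}) : is_ideal J -> forall x y, x \in J -> y \in J -> x - y \in J.
Proof. move=> hJ x y hx hy; have [_ [Ha _]] := hJ; apply: Ha => //; exact: ideal_opp. Qed.

Lemma nonunit_inM (Hloc : is_local R) (M : {set R}) (HM : is_maximal_ideal M) x :
  x \isn't a GRing.unit -> x \in M.
Proof.
move=> hx.
pose J := [set r * x | r : R].
have hJ : is_ideal J.
  split; [|split].
  - by apply/imsetP; exists 0 => //; rewrite mul0r.
  - move=> a b /imsetP [r _ ->] /imsetP [s _ ->]; apply/imsetP; exists (r + s) => //; by rewrite mulrDl.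
  - move=> a b /imsetP [r _ ->]; apply/imsetP; exists (a * r) => //; by rewrite mulrA.
have hJT : J != setT.
  apply/negP => /eqP hT; have : 1 \in J by rewrite hT inE.
  case/imsetP => r _ e; move/negP: hx; apply; apply/unitrP; exists r; split; first by rewrite e.
  by rewrite mulrC e.
case: (exists_max hJ hJT) => M' [hM' hsub].
case: Hloc => M0 [_ huniq].
have e1 := huniq _ hM'; have e2 := huniq _ HM.
have : x \in J by apply/imsetP; exists 1 => //; rewrite mul1r.
by move/(subsetP hsub); rewrite e1 -e2.
Qed.

End Aux.

Section Main.
Variables (R : finComUnitRingType) (K : {group {unit R}}) (I M : {set R}).
Hypothesis HI : is_ideal I.
Hypothesis HKI : [set k + x | k in Kset K, x in I] = Kset K.
Hypothesis Hnorm : cyc_normal K.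

Lemma Kset1 : 1 \in Kset K.
Proof. apply/imsetP; exists 1%g => //; by rewrite FinRing.val_unit1. Qed.

Lemma add1I i : i \in I -> 1 + i \in Kset K.
Proof. move=> hi; rewrite -HKI; apply: imset2_f => //; exact: Kset1. Qed.

Lemma rel_scale d (v : {unit R}) r : v \in K ->
  (d * val v \in [set r * k | k in Kset K]) = (d \in [set r * k | k in Kset K]).
Proof.
move=> hv; apply/idP/idP.
- case/imsetP => k /imsetP [w hw ->] E; apply/imsetP; exists (val (w * v^-1)%g).
    by apply/imsetP; exists (w * v^-1)%g => //; rewrite groupM ?groupV.
  rewrite FinRing.val_unitM FinRing.val_unitV -[LHS](mulrK (valP v)) E -mulrA //.
- case/imsetP => k /imsetP [w hw ->] ->; apply/imsetP; exists (val (w * v)%g).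
    by apply/imsetP; exists (w * v)%g => //; rewrite groupM.
  by rewrite FinRing.val_unitM mulrA.
Qed.

Variable phi : R -> R.
Hypothesis hphi : forall x y, exists2 i, i \in I & phi y - phi x = (y - x) * i.

Definition fphi x := x + phi x.

Lemma fphi_diff x y : exists2 v, v \in K & fphi y - fphi x = (y - x) * val v.
Proof.
case: (hphi x y) => i hi e; case/imsetP: (add1I hi) => v hv ev.
exists v => //; rewrite -ev mulrDr mulr1 -e /fphi; ring.
Qed.

Lemma fphi_inj : injective fphi.
Proof.
move=> x y e; case: (fphi_diff x y) => v _; rewrite e subrr => h.
have : y - x = 0 by rewrite -[LHS](mulrK (valP v)) -h mul0r.
by move/eqP; rewrite subr_eq0 => /eqP.
Qed.

Definition fperm := perm fphi_inj.

Lemma fperm_aut : cyc_aut K fperm.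
Proof.
move=> r.
have key : forall x y, ((fphi x, fphi y) \in cycRel K r) = ((x, y) \in cycRel K r).
  move=> x y; rewrite !inE /=; case: (fphi_diff x y) => v hv ->; exact: rel_scale.
apply/setP => -[a b]; apply/imsetP/idP.
- case => -[x y] hp [-> ->]; by rewrite !permE key.
- move=> hab.
  have fK z : fphi (fperm^-1 z)%g = z by have := permKV fperm z; rewrite permE.
  exists (fperm^-1 a, fperm^-1 b)%g.
    by rewrite -key !fK.
  by rewrite /= !permKV.
Qed.

Lemma fadd x y : fphi (x + y) + fphi 0 = fphi x + fphi y.
Proof.
case: (Hnorm fperm_aut) => a [b [s [[_ [sadd _]] hf]]].
have s0 : s 0 = 0.
  have h := sadd 0 0; rewrite addr0 in h.
  by apply: (addrI (s 0)); rewrite addr0 -h.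
have hf' : forall z, fphi z = val a * s z + b by move=> z; rewrite -hf permE.
rewrite !hf' sadd s0; ring.
Qed.

End Main.
Unset Implicit Arguments.

Theorem theorem1p4 (R : finComUnitRingType) (Hloc : is_local R)
  (M : {set R}) (HM : is_maximal_ideal M)
  (K : {group {unit R}}) (Hnorm : cyc_normal K)
  (I : {set R}) (HI : is_ideal I)
  (HKI : [set k + x | k in Kset K, x in I] = Kset K) :
  (residue_order M <> 2%N -> I = [set 0]) /\
  (residue_order M = 2%N -> I \subset I0 M).
Proof.
have [HMi [HMT _]] := HM.
have unitM : forall x, x \notin M -> x \is a GRing.unit.
  move=> x hx; apply/negPn/negP => hu; move/negP: hx; apply; exact: nonunit_inM hu.
have M0 : 0 \in M by case: HMi.
have Madd : forall x y, x \in M -> y \in M -> x + y \in M by case: HMi => _ [].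
have Mmul : forall r x, x \in M -> r * x \in M by case: HMi => _ [].
have Msub := ideal_sub HMi.
have I0in : 0 \in I by case: HI.
have Isub := ideal_sub HI.
have Imul : forall r x, x \in I -> r * x \in I by case: HI => _ [].
have notM1 : 1 \notin M.
  apply/negP => h1; move/negP: HMT; apply; apply/eqP/setP => x; rewrite inE.
  by rewrite -(mulr1 x) Mmul.
have notMN1 : - 1 \notin M.
  apply/negP => h; move/negP: notM1; apply; by rewrite -[1]opprK ideal_opp.
have not1m : forall m, m \in M -> 1 + m \notin M.
  move=> m hm; apply/negP => h; move/negP: notM1; apply.
  by rewrite (_ : 1 = (1 + m) - m); [exact: Msub | ring].
have IM : I \subset M.
  apply/subsetP => c hc; apply/negPn/negP => hcM.
  have hu := unitM _ hcM.
  have h1 : 1 \in I by rewrite -(mulVr hu); exact: Imul.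
  have : 1 + (- 1) \in Kset K by rewrite -HKI; apply: imset2_f; [exact: Kset1 | exact: ideal_opp].
  rewrite subrr => /imsetP [u _ e].
  by move: (valP u); rewrite -e unitr0.
have mkphi : forall (phi : R -> R), (forall x, phi x \in I) ->
    (forall x y, y - x \in M -> exists2 i, i \in I & phi y - phi x = (y - x) * i) ->
    forall x y, exists2 i, i \in I & phi y - phi x = (y - x) * i.
  move=> phi hI hM x y; case: (boolP (y - x \in M)) => hd; first exact: hM.
  exists ((y - x)^-1 * (phi y - phi x)); first by apply: Imul; apply: Isub.
  by rewrite mulrA divrr ?mul1r //; exact: unitM.
split.
- move=> hq; apply/setP => c; rewrite inE; apply/idP/eqP => [hc|->]; last by [].
  have [y hy1 hy2] : exists2 y, y \notin M & y - 1 \notin M.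
    case: (boolP [exists y, (y \notin M) && (y - 1 \notin M)]).
      by case/existsP => y /andP [h1 h2]; exists y.
    move=> hne; exfalso; apply: hq.
    have H : forall y, (y \in M) || (y - 1 \in M).
      move=> y; move/existsPn: hne => /(_ y); by rewrite negb_and !negbK.
    have cosetE : forall x, [set x + m | m in M] = [set z | z - x \in M].
      move=> x; apply/setP => z; rewrite inE; apply/imsetP/idP => [[m hm ->]| h].
        by rewrite (_ : x + m - x = m) //; ring.
      by exists (z - x) => //; ring.
    have ceq : forall a b, a - b \in M -> [set z | z - a \in M] = [set z | z - b \in M].
      move=> a b hab; apply/setP => z; rewrite !inE; apply/idP/idP => h.
        by rewrite (_ : z - b = (z - a) + (a - b)); [exact: Madd | ring].
      by rewrite (_ : z - a = (z - b) - (a - b)); [exact: Msub | ring].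
    have E : [set [set x + m | m in M] | x : R] =
             [set [set z | z - 0 \in M]; [set z | z - 1 \in M]].
      apply/setP => X; rewrite !inE; apply/imsetP/idP.
      - case => x _ ->; rewrite cosetE; case/orP: (H x) => hx.
          by rewrite (ceq x 0) ?eqxx // subr0.
        by rewrite (ceq x 1) ?eqxx ?orbT.
      - case/orP => /eqP ->; [exists 0 | exists 1] => //; by rewrite cosetE.
    rewrite /residue_order E cards2.
    have -> : [set z | z - 0 \in M] != [set z | z - 1 \in M].
      apply/negP => /eqP /setP /(_ 0); rewrite !inE subr0 M0 sub0r.
      by move=> h; move/negP: notMN1; apply; rewrite -h.
    by [].
  pose phi := fun x : R => if x - 1 \in M then c else 0.
  have hphi : forall x y, exists2 i, i \in I & phi y - phi x = (y - x) * i.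
    apply: mkphi; first by move=> x; rewrite /phi; case: ifP.
    move=> x0 y0 hd; exists 0 => //; rewrite /phi.
    have -> : (y0 - 1 \in M) = (x0 - 1 \in M).
      apply/idP/idP => h.
        by rewrite (_ : x0 - 1 = (y0 - 1) - (y0 - x0)); [exact: Msub | ring].
      by rewrite (_ : y0 - 1 = (x0 - 1) + (y0 - x0)); [exact: Madd | ring].
    by case: ifP => _; rewrite subrr mulr0.
  have := fadd HKI Hnorm hphi 1 y.
  rewrite /fphi /phi (_ : 1 + y - 1 = y); last by ring.
  rewrite sub0r subrr (negbTE hy1) (negbTE hy2) (negbTE notMN1) M0.
  move=> h; change (c = 0); rewrite !addr0 in h.
  have -> : c = (1 + c + y) - (1 + y) by ring.
  by rewrite -h subrr.
- move=> _; apply/subsetP => c hc; rewrite inE (subsetP IM c hc) /=.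
  apply/forallP => m; apply/implyP => hm.
  pose phi := fun x : R => if x \in M then c * x else 0.
  have hphi : forall x y, exists2 i, i \in I & phi y - phi x = (y - x) * i.
    apply: mkphi; first by move=> x; rewrite /phi; case: ifP => // _; rewrite mulrC Imul.
    move=> x y hd; rewrite /phi.
    have -> : (y \in M) = (x \in M).
      apply/idP/idP => h.
        by rewrite (_ : x = y - (y - x)); [exact: Msub | ring].
      by rewrite (_ : y = x + (y - x)); [exact: Madd | ring].
    case: ifP => _; [exists c => //; ring | exists 0 => //; ring].
  have := fadd HKI Hnorm hphi 1 m.
  rewrite /fphi /phi (negbTE (not1m m hm)) (negbTE notM1) M0 hm.
  move=> h; apply/eqP; rewrite mulr0 !addr0 in h.
  have -> : c * m = (1 + (m + c * m)) - (1 + m) by ring.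
  by rewrite -h subrr.
Qed.
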